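(* Let $d\ge1$, $p\ge1$, $\sigma>0$, $\alpha>0$, let $F$, $U$, $\Phi$ be as in the context (satisfying the standing assumption there), and let $m_0\in\mathcal P_p(\mathbb R^d)$ be absolutely continuous with density $m_0(\cdot)$. Let $(m_t)_{t\ge0}$ be a solution in $C([0,+\infty);\mathcal W_p)$ of the entropic fictitious play $\frac{dm_t}{dt}=\alpha(\hat m_t-m_t)$ with initial value $m_0$, and let $m_t(\cdot)$ be its density given by $m_t(x)=\int_0^t\alpha e^{-\alpha(t-s)}\hat m_s(x)\,ds+e^{-\alpha t}m_0(x)$. Then there exist constants $c,C>0$, depending only on $F$ and $U$, such that for every $t\ge0$ and every $x\in\mathbb R^d$, \[ m_t(x)\ge(1-e^{-\alpha t})\,c\,e^{-U(x)},\qquad m_t(x)\le(1-e^{-\alpha t})\,C\,e^{-U(x)}+e^{-\alpha t}m_0(x). \]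
   Context: $\mathcal P(\mathbb R^d)$ denotes the Borel probability measures on $\mathbb R^d$, $\mathcal P_p(\mathbb R^d)$ those with finite $p$-th moment, $\mathcal W_p$ the $p$-Wasserstein distance (also the metric space $(\mathcal P_p(\mathbb R^d),\mathcal W_p)$). Standing assumption: (a) $F:\mathcal P(\mathbb R^d)\to\mathbb R$ is non-negative and there is a continuous function $\frac{\delta F}{\delta m}:\mathcal P(\mathbb R^d)\times\mathbb R^d\to\mathbb R$ such that for all $m_0,m_1$, $F(m_1)-F(m_0)=\int_0^1\int\frac{\delta F}{\delta m}(m_\lambda,x)\,(m_1-m_0)(dx)\,d\lambda$ with $m_\lambda=(1-\lambda)m_0+\lambda m_1$; and there are $L_F,M_F>0$ with $|\frac{\delta F}{\delta m}(m,x)-\frac{\delta F}{\delta m}(m',x')|\le L_F(\mathcal W_p(m,m')+|x-x'|)$ and $|\frac{\delta F}{\delta m}(m,x)|\le M_F$ for all $m,m',x,x'$. (b) $U:\mathbb R^d\to\mathbb R$ is measurable, $\int e^{-U}dx=1$, $\operatorname{ess\,inf}U>-\infty$, $\liminf_{|x|\to\infty}U(x)/|x|^p>0$. For $m\in\mathcal P_p(\mathbb R^d)$, $\hat m=\Phi(m)$ is the probability measure with density $\hat m(x)\propto\exp(-\frac{2}{\sigma^2}\frac{\delta F}{\delta m}(m,x)-U(x))$ (the unique minimizer of $\mu\mapsto\int\frac{\delta F}{\delta m}(m,x)\mu(dx)+\frac{\sigma^2}{2}H(\mu|g)$, $g$ having density $e^{-U}$). $\hat m_t:=\Phi(m_t)$.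 The equation is understood in the sense of distributions. *)

(* Defs.v *)
From HB Require Import structures.
From mathcomp Require Import all_boot all_order all_algebra.
From mathcomp Require Import all_classical all_reals all_analysis ess_sup_inf.
Set Implicit Arguments. Unset Strict Implicit. Unset Printing Implicit Defensive.
Import Order.TTheory GRing.Theory Num.Theory.
Import numFieldNormedType.Exports.
Local Open Scope classical_set_scope.
Local Open Scope ring_scope.

Section EntropicFP.
Variables (R : realType) (d : nat).

(* R^d with its Borel sigma-algebra (generated by the open sets of the
   product topology on row vectors, i.e. the usual topology of R^d). *)
Definition Rd := g_sigma_algebraType (@open 'rV[R]_d).
Definition vec (x : Rd) : 'rV[R]_d := x.

Definition enorm (v : 'rV[R]_d) : R := Num.sqrt (\sum_i v ord0 i ^+ 2).
Definition edist (x y : Rd) : R := enorm (vec x - vec y).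

(* lam is the Lebesgue measure on R^d: a measure on the Borel sets giving to
   every box ]a,b] its volume (this determines it uniquely). *)
Definition is_lebesgue_Rd (lam : {measure set Rd -> \bar R}) : Prop :=
  forall a b : 'rV[R]_d, (forall i, a ord0 i <= b ord0 i) ->
    lam [set x : Rd | forall i, a ord0 i < vec x ord0 i <= b ord0 i]
    = (\prod_i (b ord0 i - a ord0 i))%:E.

Definition PR := probability Rd R.

Definition in_Pp (p : R) (m : PR) : Prop :=
  (\int[m]_x ((enorm (vec x)) `^ p)%:E < +oo)%E.

Definition coupling (m m' : PR) (pi : probability (Rd * Rd)%type R) : Prop :=
  forall A : set Rd, measurable A ->
    pi (A `*` setT) = m A /\ pi (setT `*` A) = m' A.

Definition Wp (p : R) (m m' : PR) : \bar R :=
  ((ereal_inf [set (\int[pi]_z ((edist z.1 z.2) `^ p)%:E)%E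
                | pi in coupling m m']) `^ p^-1)%E.

Definition flat_derivative (F : PR -> R) (dF : PR -> Rd -> R) : Prop :=
  forall (m0 m1 : PR) (ml : R -> PR),
    (forall l, 0 <= l <= 1 -> forall A, measurable A ->
        ml l A = ((1 - l)%:E * m0 A + l%:E * m1 A)%E) ->
    F m1 - F m0 =
      \int[lebesgue_measure]_(l in `[0, 1])
         (\int[m1]_x dF (ml l) x - \int[m0]_x dF (ml l) x).

Definition dF_continuous (p : R) (dF : PR -> Rd -> R) : Prop :=
  forall (m : PR) (x : Rd), in_Pp p m -> forall eps : R, 0 < eps ->
    exists2 delta : R, 0 < delta &
      forall (m' : PR) (x' : Rd), in_Pp p m' ->
        (Wp p m m' + (edist x x')%:E < delta%:E)%E ->
        `|dF m x - dF m' x'| < eps.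

Definition dF_lipschitz (p : R) (dF : PR -> Rd -> R) (LF : R) : Prop :=
  forall (m m' : PR) (x x' : Rd), in_Pp p m -> in_Pp p m' ->
    (`|dF m x - dF m' x'|%:E <= LF%:E * (Wp p m m' + (edist x x')%:E))%E.

Definition dF_bounded (dF : PR -> Rd -> R) (MF : R) : Prop :=
  forall (m : PR) (x : Rd), `|dF m x| <= MF.

Definition standing_F (p : R) (F : PR -> R) (dF : PR -> Rd -> R) : Prop :=
  (forall m, 0 <= F m) /\ flat_derivative F dF /\ dF_continuous p dF /\
  (exists2 LF : R, 0 < LF & dF_lipschitz p dF LF) /\
  (exists2 MF : R, 0 < MF & dF_bounded dF MF).

Definition standing_U (lam : {measure set Rd -> \bar R}) (p : R) (U : Rd -> R)
  : Prop :=
  measurable_fun setT U /\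
  (\int[lam]_x (expR (- U x))%:E = 1)%E /\
  (ess_inf lam (EFin \o U) > -oo)%E /\
  (exists2 c : R, 0 < c & exists r : R, forall x : Rd,
      r <= enorm (vec x) -> c < U x / (enorm (vec x)) `^ p).

Definition Phi_exponent (sigma : R) (dF : PR -> Rd -> R) (U : Rd -> R)
  (m : PR) (x : Rd) : R :=
  expR (- (2 / sigma ^+ 2) * dF m x - U x).

Definition Phi_density (lam : {measure set Rd -> \bar R}) (sigma : R)
  (dF : PR -> Rd -> R) (U : Rd -> R) (m : PR) (x : Rd) : R :=
  Phi_exponent sigma dF U m x / \int[lam]_y Phi_exponent sigma dF U m y.

Definition Wp_continuous_curve (p : R) (m : R -> PR) : Prop :=
  (forall t, 0 <= t -> in_Pp p (m t)) /\
  forall t, 0 <= t -> forall eps : R, 0 < eps ->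
    exists2 delta : R, 0 < delta &
      forall s, 0 <= s -> `|s - t| < delta -> (Wp p (m s) (m t) < eps%:E)%E.

(* dm_t/dt = alpha (hat m_t - m_t) in the sense of distributions, written in
   its (equivalent) time-integrated weak form against continuous compactly
   supported test functions. *)
Definition EFP_solution (lam : {measure set Rd -> \bar R}) (sigma alpha : R)
  (dF : PR -> Rd -> R) (U : Rd -> R) (m : R -> PR) : Prop :=
  forall phi : 'rV[R]_d -> R, continuous phi ->
    (exists r : R, forall v, r < enorm v -> phi v = 0) ->
    forall t, 0 <= t ->
      \int[m t]_x phi (vec x) =
        \int[m 0]_x phi (vec x) +
        \int[lebesgue_measure]_(s in `[0, t])
           (alpha * (\int[lam]_x (phi (vec x) * Phi_density lam sigma dF U (m s) x)
                     - \int[m s]_x phi (vec x))).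

Definition is_density (lam : {measure set Rd -> \bar R}) (mu : PR) (f : Rd -> R)
  : Prop :=
  (forall x, 0 <= f x) /\ measurable_fun setT f /\
  forall A : set Rd, measurable A -> mu A = (\int[lam]_(x in A) (f x)%:E)%E.

End EntropicFP.

(* Main.v *)
Require Import Defs.
From HB Require Import structures.
From mathcomp Require Import all_boot all_order all_algebra.
From mathcomp Require Import all_classical all_reals all_analysis.
From mathcomp Require Import ring lra measurable_realfun.
Import Order.TTheory GRing.Theory Num.Theory.
Import numFieldNormedType.Exports.
Local Open Scope classical_set_scope.
Local Open Scope ring_scope.

Section S.
Lemma ge0_le_integral_nm (R : realType) dd (T : measurableType dd)
  (mu : {measure set T -> \bar R}) (D : set T) (f g : T -> \bar R) :
  (forall x, D x -> (0 <= f x)%E) -> (forall x, D x -> (f x <= g x)%E) ->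
  (\int[mu]_(x in D) f x <= \int[mu]_(x in D) g x)%E.
Proof.
move=> f0 fg.
have g0 : forall x, D x -> (0 <= g x)%E by move=> x Dx; exact: le_trans (f0 x Dx) (fg x Dx).
rewrite (ge0_integralE _ f0) (ge0_integralE _ g0).
apply: le_ereal_sup => _ [h hf <-]; exists h => //= x.
apply: le_trans (hf x) _.
rewrite /patch; case: ifP => // /set_mem Dx.
exact: fg.
Qed.

Variable R : realType.

Lemma der_aux (a t k s : R) :
  is_derive s 1 (fun s => k * expR (- a * (t - s))) (k * (expR (- a * (t - s)) * a)).
Proof.
have hf : is_derive s 1 (fun s : R => - a * (t - s)) a.
  have -> : (fun s : R => - a * (t - s)) = (fun s => a *: (@id R s) - cst (a * t) s).
    by apply/funext => u /=; rewrite /GRing.scale/=; ring.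
  apply: is_derive_eq.
  by rewrite /GRing.scale /=; ring.
have he : is_derive (- a * (t - s)) 1 expR (expR (- a * (t - s))) by exact: is_derive_expR.
have hc := @is_derive1_comp R expR (fun s : R => - a * (t - s)) s _ _ he hf.
have -> : (fun s => k * expR (- a * (t - s))) = k *: (expR \o (fun s : R => - a * (t - s))).
  by apply/funext => u.
apply: is_derive_eq.
by rewrite /GRing.scale /=.
Qed.

Lemma cont_aux (a t k s : R) : {for s, continuous (fun s => k * expR (- a * (t - s)))}.
Proof.
apply/differentiable_continuous/derivable1_diffP.
by case: (der_aux a t k s).
Qed.

Lemma ftc_aux (a t k : R) : 0 < t ->
  (\int[lebesgue_measure]_(s in `[0%R, t]) (k * (a * expR (- a * (t - s))))%:E
   = (k * (1 - expR (- a * t)))%:E)%E.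
Proof.
move=> t0.
have dF s := der_aux a t k s.
transitivity (\int[lebesgue_measure]_(s in `[0%R, t]) ((k * a) * expR (- a * (t - s)))%:E)%E.
  by apply: eq_integral => u _; congr EFin; ring.
rewrite (@continuous_FTC2 R (fun s => (k * a) * expR (- a * (t - s)))
   (fun s => k * expR (- a * (t - s))) 0 t t0).
- by rewrite subrr mulr0 expR0 subr0 -EFinB; congr EFin; ring.
- by apply: continuous_subspaceT => x; exact: cont_aux.
- split.
  + by move=> x _; case: (dF x).
  + exact: cvg_at_right_filter (cont_aux a t k 0).
  + exact: cvg_at_left_filter (cont_aux a t k t).
- move=> x _; rewrite derive1E derive_val; ring.
Qed.

Lemma fine_bounds (I : \bar R) (lo hi : R) :
  (lo%:E <= I)%E -> (I <= hi%:E)%E -> lo <= fine I <= hi.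
Proof. by case: I => [r| |] //=; rewrite !lee_fin => -> ->. Qed.

Lemma time_bounds (a t lo hi : R) (f : R -> R) : 0 <= t -> 0 < a -> 0 <= lo ->
  (forall s, 0 <= s <= t -> lo <= f s <= hi) ->
  (1 - expR (- a * t)) * lo <=
    \int[lebesgue_measure]_(s in `[0, t]) (a * expR (- a * (t - s)) * f s)
  <= (1 - expR (- a * t)) * hi.
Proof.
move=> t0 a0 lo0 hf.
have [->|tp] := eqVneq t 0.
  rewrite set_itv1 /Rintegral integral_set1 /= mulr0 expR0 subrr !mul0r.
  by rewrite lexx.
have {tp}tp : 0 < t by rewrite lt_neqAle eq_sym tp t0.
apply: fine_bounds.
- rewrite mulrC -ftc_aux //.
  apply: ge0_le_integral_nm.
    move=> s _; rewrite lee_fin; apply: mulr_ge0 => //.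
    by apply: mulr_ge0; [exact: ltW|exact: expR_ge0].
  move=> s; rewrite /= in_itv /= => /andP[s0 st]; rewrite lee_fin.
  have := hf s; rewrite s0 st => /(_ erefl) /andP[h1 _].
  rewrite [X in _ <= X]mulrC; apply: ler_wpM2r => //.
  by apply: mulr_ge0; [exact: ltW|exact: expR_ge0].
- rewrite mulrC -ftc_aux //.
  apply: ge0_le_integral_nm.
    move=> s; rewrite /= in_itv /= => /andP[s0 st]; rewrite lee_fin.
    have := hf s; rewrite s0 st => /(_ erefl) /andP[h1 _].
    apply: mulr_ge0; last exact: le_trans h1.
    by apply: mulr_ge0; [exact: ltW|exact: expR_ge0].
  move=> s; rewrite /= in_itv /= => /andP[s0 st]; rewrite lee_fin.
  have := hf s; rewrite s0 st => /(_ erefl) /andP[_ h2].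
  rewrite [X in _ <= X]mulrC; apply: ler_wpM2l => //.
  by apply: mulr_ge0; [exact: ltW|exact: expR_ge0].
Qed.
End S.

Theorem corollary18 (R : realType) (d : nat) (p sigma : R)
  (lam : {measure set (Rd R d) -> \bar R})
  (F : PR R d -> R) (dF : PR R d -> Rd R d -> R) (U : Rd R d -> R) :
  (1 <= d)%N -> 1 <= p -> 0 < sigma ->
  is_lebesgue_Rd lam ->
  standing_F p F dF ->
  standing_U lam p U ->
  exists c C : R, 0 < c /\ 0 < C /\
    forall (alpha : R) (m : R -> PR R d) (m0d : Rd R d -> R)
           (mdens : R -> Rd R d -> R),
      0 < alpha ->
      is_density lam (m 0) m0d ->
      Wp_continuous_curve p m ->
      EFP_solution lam sigma alpha dF U m ->
      (forall t, 0 <= t -> forall x,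
         mdens t x =
           \int[lebesgue_measure]_(s in `[0, t])
              (alpha * expR (- alpha * (t - s)) * Phi_density lam sigma dF U (m s) x)
           + expR (- alpha * t) * m0d x) ->
      (forall t, 0 <= t -> is_density lam (m t) (mdens t)) ->
      forall t, 0 <= t -> forall x : Rd R d,
        (1 - expR (- alpha * t)) * c * expR (- U x) <= mdens t x /\
        mdens t x <= (1 - expR (- alpha * t)) * C * expR (- U x)
                     + expR (- alpha * t) * m0d x.
Proof.
move=> d1 p1 s0 leb [F0 [_ [_ [_ [MF MF0 hMF]]]]] [mU [intU _]].
set c2 := 2 / sigma ^+ 2.
have c20 : 0 <= c2 by rewrite /c2; apply: divr_ge0 => //; exact: sqr_ge0.
set K := c2 * MF.
have K0 : 0 <= K by rewrite /K; apply: mulr_ge0 => //; exact: ltW.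
set A := expR (- K). set B := expR K.
have A0 : 0 < A by exact: expR_gt0.
have B0 : 0 < B by exact: expR_gt0.
have AB : A * B = 1 by rewrite /A /B -expRD addNr expR0.
have hexp : forall m x, A * expR (- U x) <= Phi_exponent sigma dF U m x <= B * expR (- U x).
  move=> m x; rewrite /Phi_exponent /A /B -!expRD !ler_expR.
  have := hMF m x; rewrite ler_norml => /andP[h1 h2].
  have h3 : c2 * dF m x <= K by rewrite /K; exact: ler_wpM2l.
  have h4 : - K <= c2 * dF m x by rewrite /K -mulrN; exact: ler_wpM2l.
  rewrite /c2 in h3 h4 *; rewrite mulNr; apply/andP; split; lra.
have mE : measurable_fun [set: Rd R d] (fun x => expR (- U x)).
  apply: measurableT_comp; first exact: measurable_expR.
  exact: measurable_funN.
have hZ : forall m : PR R d, A <= \int[lam]_y Phi_exponent sigma dF U m y <= B.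
  move=> m; apply: fine_bounds.
  - rewrite -[A]mulr1 EFinM -intU -ge0_integralZl_EFin;
      [|done|by move=> y _; rewrite lee_fin; exact: expR_ge0|exact/measurable_EFinP|exact: ltW].
    apply: ge0_le_integral_nm.
      by move=> y _; rewrite lee_fin; apply: mulr_ge0; [exact: ltW|exact: expR_ge0].
    by move=> y _; rewrite lee_fin; have /andP[] := hexp m y.
  - rewrite -[B]mulr1 EFinM -intU -ge0_integralZl_EFin;
      [|done|by move=> y _; rewrite lee_fin; exact: expR_ge0|exact/measurable_EFinP|exact: ltW].
    apply: ge0_le_integral_nm.
      move=> y _; rewrite lee_fin; have /andP[h _] := hexp m y.
      apply: le_trans h; apply: mulr_ge0; [exact: ltW|exact: expR_ge0].
    by move=> y _; rewrite lee_fin; have /andP[] := hexp m y.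
have hPhi : forall m x, A * A * expR (- U x) <= Phi_density lam sigma dF U m x
                        <= B * B * expR (- U x).
  move=> m x; rewrite /Phi_density.
  have /andP[e1 e2] := hexp m x.
  have /andP[z1 z2] := hZ m.
  have Z0 : 0 < \int[lam]_y Phi_exponent sigma dF U m y by exact: lt_le_trans z1.
  have u0 : 0 < expR (- U x) by exact: expR_gt0.
  move: e1 e2 z1 z2 Z0.
  set E := Phi_exponent sigma dF U m x.
  set Z := \int[lam]_y Phi_exponent sigma dF U m y.
  set u := expR (- U x) => e1 e2 z1 z2 Z0.
  rewrite ler_pdivlMr // ler_pdivrMr //.
  have eA : A * A * u * B = A * u by rewrite (_ : A * A * u * B = A * u * (A * B)); [rewrite AB mulr1|ring].
  have eB : B * B * u * A = B * u by rewrite (_ : B * B * u * A = B * u * (A * B)); [rewrite AB mulr1|ring].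
  have pA : 0 <= A * A * u by apply: mulr_ge0; [apply: mulr_ge0|]; exact: ltW.
  have pB : 0 <= B * B * u by apply: mulr_ge0; [apply: mulr_ge0|]; exact: ltW.
  apply/andP; split.
    apply: le_trans e1; rewrite -eA; exact: ler_wpM2l.
  apply: le_trans e2 _; rewrite -eB; exact: ler_wpM2l.
exists (A * A), (B * B); split; first exact: mulr_gt0.
split; first exact: mulr_gt0.
move=> alpha m m0d mdens a0 [m0pos _] _ _ hmd _ t t0 x.
rewrite hmd //.
have hlo : 0 <= A * A * expR (- U x).
  by apply: mulr_ge0; [apply: mulr_ge0|exact: expR_ge0]; exact: ltW.
have /andP[h1 h2] := @time_bounds R alpha t (A * A * expR (- U x)) (B * B * expR (- U x))
  (fun s => Phi_density lam sigma dF U (m s) x) t0 a0 hlo (fun s _ => hPhi (m s) x).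
have em : 0 <= expR (- alpha * t) * m0d x by apply: mulr_ge0; [exact: expR_ge0|exact: m0pos].
rewrite !mulrA in h1 h2 *.
split; lra.
Qed.
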